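(* Let $p,n$ be positive integers with $\gcd(p,n)=1$, and $y\in\mathbb{Z}_n$. Then the full pointed quandle coloring quiver $\mathcal{Q}_{(\mathbb{Z}_n,y,y)}(\widetilde{\mathcal{T}(p,2)})$ is isomorphic to $K_{1,n}$, i.e. it has a single vertex (the trivial coloring) carrying $n$ loops.
   Context: $\mathbb{Z}_n$ is the dihedral quandle ($x\triangleright y=2y-x$ mod $n$) and $(\mathbb{Z}_n,y,y)$ the $2$-pointed quandle with both basepoints $y$. $P(\widetilde{\mathcal{T}(p,2)})=(Q,x_1,x_{p+1})$ with $Q=\langle x_1,\dots,x_{p+1}\mid x_p=x_2\triangleright x_{p+1},\ x_i=x_{i+2}\triangleright x_{i+1}\ (1\le i\le p-1)\rangle$, the fundamental pointed quandle of the $1$-linkoid of $(p,2)$-torus type. For a pointed quandle $\mathcal{X}$, the full pointed quandle coloring quiver $\mathcal{Q}_{\mathcal{X}}(L)$ is the directed multigraph with vertex set $\hom(P(L),\mathcal{X})$ (basepoint-preserving homomorphisms) and, for vertices $\alpha,\beta$, $|\{\varphi\in\operatorname{End}(\mathcal{X}):\varphi\circ\alpha=\beta\}|$ arcs from $\alpha$ to $\beta$, where $\operatorname{End}(\mathcal{X})$ is the set of pointed endomorphisms. $K_{m,k}$ denotes the directed multigraph on vertex set $\{1,\dots,m\}$ with exactly $k$ arcs from $u$ to $v$ for every ordered pair $(u,v)$ (including $u=v$). *)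

(* Defs.v *)
From mathcomp Require Import all_boot.
Set Implicit Arguments. Unset Strict Implicit. Unset Printing Implicit Defensive.

(* x |> y = 2y - x (mod n); for x < n, (2y + (n - x)) mod n is exactly that. *)
Lemma dtri_lt (n : nat) (x y : 'I_n) : (2 * y + (n - x)) %% n < n.
Proof. by rewrite ltn_pmod // (leq_ltn_trans (leq0n x) (ltn_ord x)). Qed.

Definition dtri (n : nat) (x y : 'I_n) : 'I_n := Ordinal (dtri_lt x y).

Definition is_pend (n : nat) (y : 'I_n) (phi : {ffun 'I_n -> 'I_n}) : bool :=
  [forall a, forall b, phi (dtri a b) == dtri (phi a) (phi b)] && (phi y == y).

(* ---------- Colorings of P(T~(p,2)) = (Q, x_1, x_{p+1}) ----------
   Q = < x_1..x_{p+1} | x_p = x_2 |> x_{p+1},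
                        x_i = x_{i+2} |> x_{i+1}  (1 <= i <= p-1) >.
   By the universal property of a presented quandle, a homomorphism Q -> Z_n
   is the same as an assignment of the generators satisfying the relations.
   Generator x_{k+1} is stored at index k : 'I_p.+1.
   A basepoint-preserving homomorphism sends x_1 and x_{p+1} to y. *)
Definition gen (p n : nat) (c : {ffun 'I_p.+1 -> 'I_n}) (k : nat) : 'I_n :=
  c (inord k).

Definition is_pcoloring (p n : nat) (y : 'I_n) (c : {ffun 'I_p.+1 -> 'I_n}) : bool :=
  [&& gen c 0 == y, gen c p == y,
      gen c p.-1 == dtri (gen c 1) (gen c p)
    & [forall i : 'I_p, (1 <= i.+1 <= p - 1) ==>
         (gen c i == dtri (gen c i.+2) (gen c i.+1))]].

Definition pcol (p n : nat) (y : 'I_n) :=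
  {c : {ffun 'I_p.+1 -> 'I_n} | is_pcoloring y c}.

Definition quiver_arcs (p n : nat) (y : 'I_n) (a b : pcol p y) : nat :=
  #|[set phi : {ffun 'I_n -> 'I_n} | is_pend y phi &
        [forall k, (val b) k == phi ((val a) k)]]|.

Definition K_arcs (m k : nat) (u v : 'I_m) : nat := k.

Definition multigraph_iso (V W : finType) (a : V -> V -> nat) (b : W -> W -> nat) : Prop :=
  exists f : V -> W, bijective f /\ forall u v, a u v = b (f u) (f v).

(* Main.v *)
Require Import Defs.
From mathcomp Require Import all_boot all_algebra ring.
Import GRing.Theory.
Set Warnings "-notation-overridden,-ambiguous-paths".

Lemma dtriZ (m : nat) (a b : 'Z_(m.+2)) : dtri a b = (b + b - a)%R.
Proof.
apply: val_inj => /=.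
by rewrite modnDm mul2n addnn.
Qed.

Lemma col_unique_Z m p (y : 'I_(m.+2)) (c : {ffun 'I_p.+1 -> 'I_(m.+2)}) :
  0 < p -> coprime p m.+2 -> is_pcoloring y c -> c = [ffun => y].
Proof.
move=> p0 cop /and4P [h0 hp _ /forallP hr].
pose g k : 'Z_(m.+2) := gen c k.
have rec k : k.+2 <= p -> g k.+2 = (g k.+1 + g k.+1 - g k)%R.
  move=> kp; have kp' : k < p by apply: leq_trans kp.
  have := hr (Ordinal kp'); rewrite /=.
  have -> : k < p - 1 by rewrite subn1 -ltnS prednK.
  move=> /= /eqP E; rewrite /g E dtriZ; ring.
pose d := (g 1 - g 0)%R.
have form k : k.+1 <= p -> g k = (g 0 + k%:R%R * d)%R /\ g k.+1 = (g 0 + k.+1%:R%R * d)%R.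
  elim: k => [|k IH] kp.
    by split; rewrite /d; ring.
  have [IH1 IH2] := IH (ltnW kp).
  split => //; rewrite rec // IH1 IH2 /d; ring.
have d0 : d = 0%R.
  have u : (p%:R%R : 'Z_(m.+2)) \is a GRing.unit by rewrite unitZpE // coprime_sym.
  have := form p.-1; rewrite prednK // => /(_ (leqnn p)) [_ gp].
  have e : (p%:R%R * d = 0 :> 'Z_(m.+2))%R.
    apply: (@addrI _ (g 0)); rewrite -gp addr0 /g (eqP h0) (eqP hp) //.
  by rewrite -(mulKr u d) e mulr0.
apply/ffunP => j; rewrite ffunE.
have jp : j <= p by rewrite -ltnS ltn_ord.
have gj : g j = (g 0 + j%:R%R * d)%R.
  move: (nat_of_ord j) jp => [|k] kp; first by rewrite /d; ring.
  by have [] := form k kp.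
move: gj; rewrite /g /gen inord_val => ->; rewrite d0 mulr0 addr0.
exact: (eqP h0).
Qed.

Section Card.
Variables (m : nat) (y : 'I_(m.+2)).
Local Notation Z := 'Z_(m.+2).

Definition aff (a : Z) : {ffun 'I_(m.+2) -> 'I_(m.+2)} :=
  [ffun x : 'I_(m.+2) => ((y : Z) + a * ((x : Z) - y))%R].

Lemma aff_pend a : is_pend y (aff a).
Proof.
apply/andP; split.
  apply/forallP => u; apply/forallP => v; rewrite !ffunE !dtriZ; apply/eqP.
  rewrite /=; ring.
by rewrite ffunE subrr mulr0 addr0.
Qed.

Lemma aff_inj : injective aff.
Proof.
move=> a b /ffunP/(_ ((y : Z) + 1)%R); rewrite !ffunE.
have e : ((y : Z) + 1 - y = 1)%R by ring.
by rewrite e !mulr1 => /addrI.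
Qed.

Lemma pend_aff phi : is_pend y phi -> phi = aff (phi ((y : Z) + 1)%R - y)%R.
Proof.
case/andP => /forallP hq /eqP hy.
set a := (phi ((y : Z) + 1)%R - y)%R.
have form k : phi ((y : Z) + k%:R)%R = ((y : Z) + k%:R * a)%R /\
              phi ((y : Z) + k.+1%:R)%R = ((y : Z) + k.+1%:R * a)%R.
  elim: k => [|k [IH1 IH2]].
    split; first by rewrite addr0 mul0r addr0.
    by rewrite /a; ring.
  split => //.
  have e : ((y : Z) + k.+2%:R)%R = dtri ((y : Z) + k%:R)%R ((y : Z) + k.+1%:R)%R.
    by rewrite dtriZ; ring.
  rewrite e; move: (hq ((y : Z) + k%:R)%R) => /forallP /(_ ((y : Z) + k.+1%:R)%R) /eqP ->.
  rewrite dtriZ IH1 IH2; ring.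
apply/ffunP => x; rewrite ffunE.
have ex : x = ((y : Z) + (nat_of_ord (x - y : Z)%R)%:R)%R.
  by rewrite natr_Zp; ring.
have [f1 _] := form (nat_of_ord (x - y : Z)%R).
by rewrite {1}ex f1 natr_Zp mulrC.
Qed.

Lemma card_pend_Z : #|[set phi : {ffun 'I_(m.+2) -> 'I_(m.+2)} | is_pend y phi]| = m.+2.
Proof.
have -> : [set phi : {ffun 'I_(m.+2) -> 'I_(m.+2)} | is_pend y phi] = aff @: [set: Z].
  apply/setP => phi; rewrite inE; apply/idP/imsetP.
    by move=> h; exists (phi ((y : Z) + 1)%R - y)%R; rewrite ?inE //; apply: pend_aff.
  by case=> a _ ->; apply: aff_pend.
by rewrite card_imset ?cardsT ?card_ord //; apply: aff_inj.
Qed.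
End Card.

Lemma all1 (u v : 'I_1) : u = v.
Proof. by apply/val_inj; case: u => [[|?] //]; case: v => [[|?] //]. Qed.

Lemma dtri_yy n (y : 'I_n) : dtri y y = y.
Proof.
apply: val_inj => /=.
rewrite mul2n -addnn -addnA subnKC ?modnDr ?modn_small //.
exact: ltnW (ltn_ord y).
Qed.

Lemma const_col p n (y : 'I_n) : is_pcoloring y ([ffun => y] : {ffun 'I_p.+1 -> 'I_n}).
Proof.
rewrite /is_pcoloring /gen !ffunE eqxx dtri_yy eqxx /=.
by apply/forallP => i; rewrite !ffunE dtri_yy eqxx implybT.
Qed.

Lemma col_unique p n (y : 'I_n) (c : {ffun 'I_p.+1 -> 'I_n}) :
  0 < p -> coprime p n -> is_pcoloring y c -> c = [ffun => y].
Proof.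
case: n y c => [|[|m]] y c.
- by case: y.
- by move=> *; apply/ffunP => j; apply: all1.
- exact: col_unique_Z.
Qed.

Lemma card_pend n (y : 'I_n) :
  #|[set phi : {ffun 'I_n -> 'I_n} | is_pend y phi]| = n.
Proof.
case: n y => [|[|m]] y.
- by case: y.
- have -> : [set phi : {ffun 'I_1 -> 'I_1} | is_pend y phi] = setT.
    apply/setP => phi; rewrite !inE; apply/andP; split.
      by apply/forallP => ?; apply/forallP => ?; apply/eqP; apply: all1.
    by apply/eqP; apply: all1.
  by rewrite cardsT card_ffun card_ord.
- exact: card_pend_Z.
Qed.

Theorem theorem6p13 (p n : nat) (y : 'I_n) :
  0 < p -> 0 < n -> coprime p n ->
  multigraph_iso (@quiver_arcs p n y) (@K_arcs 1 n).
Proof.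
move=> p0 n0 cop.
pose c0 : pcol p y := exist _ [ffun => y] (@const_col p n y).
have U (a : pcol p y) : a = c0.
  by apply: val_inj; case: a => c /= hc; apply: col_unique.
exists (fun _ => ord0); split.
  by exists (fun _ => c0) => [a|i]; [exact/esym/U | apply: all1].
move=> a b; rewrite (U a) (U b) /quiver_arcs /K_arcs.
rewrite -[RHS](@card_pend n y).
apply: eq_card => phi; rewrite !inE /=.
case e: (is_pend y phi) => //=; apply/forallP => k; rewrite !ffunE.
by case/andP: e => _ /eqP ->.
Qed.
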